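(* Let $n\in\mathbf{N}$ and let $A\subset[n]$ have property P. If $\left|A\cap\left(\frac{2n}{3},n\right]\right|\geqslant\frac{2n}{9}+\frac43$, then $|A|\leqslant\left\lceil\frac n3\right\rceil$.
   Context: A set $A\subset\mathbf{N}$ has property P if there are no $x,y,z\in A$ (not necessarily distinct $x,y$) with $z<x$, $z<y$ and $z\mid x+y$. $(\alpha,\beta]$ denotes the set of integers $m$ with $\alpha<m\le\beta$. *)

(* Defs.v *)
From mathcomp Require Import all_boot.
Set Implicit Arguments. Unset Strict Implicit. Unset Printing Implicit Defensive.

Definition propP (A : pred nat) : Prop :=
  ~ exists x y z, [/\ A x && A y, A z, z < x, z < y & z %| x + y].

(* [n] = {1, ..., n}, represented inside 'I_n.+1 = {0..n}; A \subset [n]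
   means additionally 0 \notin A. *)
Definition subset_range (n : nat) (A : {set 'I_n.+1}) : Prop :=
  forall i : 'I_n.+1, i \in A -> 0 < val i.

Definition natpred (n : nat) (A : {set 'I_n.+1}) : pred nat :=
  fun m => [exists i : 'I_n.+1, (i \in A) && (val i == m)].

(* Main.v *)
Require Import Defs.
From mathcomp Require Import all_boot zify.

Lemma card_le_inj n (S : {set 'I_n.+1}) (g : nat -> nat) K :
  (forall x y : 'I_n.+1, x \in S -> y \in S -> g (nat_of_ord x) = g (nat_of_ord y) -> nat_of_ord x = nat_of_ord y) ->
  (forall x : 'I_n.+1, x \in S -> g (nat_of_ord x) < K) -> #|S| <= K.
Proof.
move=> Hi Hb; rewrite cardE.
have -> : size (enum S) = size (map (fun x : 'I_n.+1 => g (nat_of_ord x)) (enum S)) by rewrite size_map.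
rewrite -(size_iota 0 K); apply: uniq_leq_size.
- rewrite map_inj_in_uniq ?enum_uniq // => x y; rewrite !mem_enum => hx hy e.
  by apply: val_inj; exact: Hi.
- move=> v /mapP [x]; rewrite mem_enum => hx ->; rewrite mem_iota /= add0n; exact: Hb.
Qed.

Lemma arith1 n z k h t : 3 * t <= 2 * n -> 2 * n < 3 * t + 3 ->
  2 * h <= z.-1 -> z.-1 <= 2 * h + 1 -> 1 <= z -> 3 * z <= 2 * n ->
  2 * n + 12 <= 9 * k -> k <= n - t ->
  ~~ ((n < 3*z) && (1 + h + (n - 2*z) <= n - t)) ->
  ~~ (h + (n + 1 - t.+1 - z) < k) -> z <= 4 * k - 2 * (n - t) - 1.
Proof. lia. Qed.

Lemma arith2 n t k z m hm : 3 * t <= 2 * n -> 2 * n < 3 * t + 3 -> k <= n - t ->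
  z <= 4 * k - 2 * (n - t) - 1 -> 2 * t.+1 + 2 * (n - t - k) <= m ->
  m <= 2 * t.+1 + 2 * (n - t - k) + z - 1 -> 2 * hm <= m.-1 -> m.-1 <= 2 * hm + 1 ->
  n - t - (minn n (m - t.+1) - hm) < k.
Proof. lia. Qed.

Lemma wbound z h r : r <> 0 -> 2 * r <> z -> r < z -> 2 * h <= z.-1 -> z.-1 <= 2 * h + 1 ->
  (minn r (z - r)).-1 < h.
Proof. lia. Qed.


Lemma res_ok z q x r : x = q * z + r -> r < z -> x + x <> 2 * q * z -> x + x <> (2 * q + 1) * z ->
  r <> 0 /\ 2 * r <> z.
Proof. move=> -> hr h1 h2; split => e; subst; [apply: h1 | apply: h2]; lia. Qed.

Lemma ww z t qx qy rx ry x y : x = qx * z + rx -> y = qy * z + ry -> rx < z -> ry < z ->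
  t < x -> x < t.+1 + z -> t < y -> y < t.+1 + z ->
  (qx < qy -> qx * z + z <= qy * z) -> (qy < qx -> qy * z + z <= qx * z) ->
  x + y <> (qx + qy + 1) * z -> rx <> 0 -> ry <> 0 ->
  (minn rx (z - rx)).-1 = (minn ry (z - ry)).-1 -> x = y.
Proof.
move=> ex ey hrx hry h1 h2 h3 h4 m1 m2 hs nx ny e.
have [ee|ee] : rx = ry \/ rx + ry = z by lia.
- subst ry. case: (ltngtP qx qy) => hq.
  + have := m1 hq; lia.
  + have := m2 hq; lia.
  + subst; done.
- exfalso; apply: hs; rewrite ex ey -ee; lia.
Qed.
Arguments res_ok {z q x r}.
Arguments wbound {z h r}.
Arguments ww {z t qx qy rx ry x y}.

Definition g3 n t m hm v := if 2 * v < m then v - t.+1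
   else if t.+1 + v <= m then m - v - t.+1 else v - t.+1 - (minn n (m - t.+1) - hm).

Lemma inj3 n t m hm x y : t < x -> t < y -> x <= n -> y <= n -> x + x <> m -> y + y <> m ->
  x + y <> m -> 2 * hm <= m.-1 -> m.-1 <= 2 * hm + 1 -> hm < minn n (m - t.+1) ->
  g3 n t m hm x = g3 n t m hm y -> x = y.
Proof.
move=> tx ty xn yn fx fy fxy h1 h2 h3; rewrite /g3.
case: ifP => c1; case: ifP => c2; try case: ifP => c3; try case: ifP => c4; lia.
Qed.

Lemma bnd3 n t m hm x : t < x -> x <= n -> x + x <> m ->
  2 * hm <= m.-1 -> m.-1 <= 2 * hm + 1 -> hm < minn n (m - t.+1) ->
  g3 n t m hm x < n - t - (minn n (m - t.+1) - hm).
Proof.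
move=> tx xn fx h1 h2 h3; rewrite /g3.
case: ifP => c1; try case: ifP => c2; lia.
Qed.

Lemma vE n (i : 'I_n) : val i = nat_of_ord i. Proof. by []. Qed.
Ltac nl := lia.
Arguments inj3 {n t m hm x y}.
Arguments bnd3 {n t m hm x}.
Lemma neqv {n} {x z : 'I_n} : x != z -> (nat_of_ord x == nat_of_ord z) = false.
Proof. by move=> h; apply/negbTE; rewrite (inj_eq val_inj). Qed.

Theorem mainTheorem9 (n : nat) (A : {set 'I_n.+1}) :
  subset_range A -> propP (natpred A) ->
  2 * n + 12 <= 9 * #|[set i in A | 2 * n < 3 * val i]| ->
  #|A| <= (n + 2) %/ 3.
Proof.
move=> Hsub HP Hk.
set B := [set i in A | 2 * n < 3 * val i] in Hk *.
have hB : forall x, (x \in B) = (x \in A) && (2 * n < 3 * nat_of_ord x) by move=> x; rewrite inE.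
clearbody B.
set t := (2 * n) %/ 3.
have ht1 : 3 * t <= 2 * n by rewrite /t; lia.
have ht2 : 2 * n < 3 * t + 3 by rewrite /t; lia.
have hL : (n + 2) %/ 3 = n - t by rewrite /t; lia.
clearbody t.
have natA : forall i, i \in A -> natpred A (val i).
  by move=> i hi; apply/existsP; exists i; rewrite hi eqxx.
have Hd : forall x y w : 'I_n.+1, x \in A -> y \in A -> w \in A ->
    nat_of_ord w < nat_of_ord x -> nat_of_ord w < nat_of_ord y -> forall j, nat_of_ord x + nat_of_ord y <> j * nat_of_ord w.
  move=> x y w hx hy hw hwx hwy j e; apply: HP; exists (val x), (val y), (val w).
  by split => //; [rewrite !natA | apply: natA | rewrite e dvdn_mull].
have HBL : #|B| <= n - t.
  apply: (@card_le_inj _ _ (fun v => v - t.+1)).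
    move=> x y; rewrite !hB => /andP [hxA hx] /andP [hyA hy] /=; nl.
  move=> x; rewrite hB => /andP [hxA hx] /=; have := ltn_ord x; nl.
case: (set_0Vmem A) => [->|[i0 hi0]]; first by rewrite cards0.
have [z hz zmin] : exists2 z : 'I_n.+1, z \in A & forall x, x \in A -> nat_of_ord z <= nat_of_ord x.
  by case: (arg_minnP (fun i : 'I_n.+1 => val i) hi0) => z hz hmin; exists z.
rewrite hL.
case: (leqP (3 * z) (2 * n)) => hz3; last first.
  apply: (@card_le_inj _ _ (fun v => v - t.+1)).
    move=> x y hx hy /=; have := zmin _ hx; have := zmin _ hy; nl.
  move=> x hx /=; have := zmin _ hx; have := ltn_ord x; nl.
have z1 : 0 < nat_of_ord z by apply: Hsub.
have Hdz : forall x y : 'I_n.+1, x \in A -> y \in A -> nat_of_ord z < x -> nat_of_ord z < y ->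
    forall j, nat_of_ord x + nat_of_ord y <> j * nat_of_ord z by move=> x y hx hy; apply: Hd.
set h := (nat_of_ord z).-1 %/ 2.
have hh1 : 2 * h <= (nat_of_ord z).-1 by rewrite /h; lia.
have hh2 : (nat_of_ord z).-1 <= 2 * h + 1 by rewrite /h; lia.
clearbody h.
have Hz2 : forall x : 'I_n.+1, x \in A -> x != z -> nat_of_ord z < x.
  move=> x hx hne; have := zmin _ hx; rewrite leq_eqVlt => /orP [/eqP e|//].
  by case/eqP: hne; apply: val_inj.
have HB2 : forall x : 'I_n.+1, x \in B -> nat_of_ord z < x.
  by move=> x; rewrite hB => /andP [_ hx]; lia.
case P1: ((n < 3 * z) && (1 + h + (n - 2 * z) <= n - t)).
  move/andP: P1 => [P1a P1b]; apply: leq_trans P1b.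
  apply: (@card_le_inj _ _ (fun v => if v == nat_of_ord z then 0 else
           if v < 2 * z then minn (v - z) (2 * z - v) else h + (v - 2 * z))).
    move=> x y hx hy /=.
    case: (eqVneq x z) => [->|hxz]; case: (eqVneq y z) => [->|hyz]; rewrite ?eqxx //.
    - rewrite (neqv hyz); have := Hz2 _ hy hyz.
      have := Hdz _ _ hy hy (Hz2 _ hy hyz) (Hz2 _ hy hyz) 4.
      case: ifP => c1; lia.
    - rewrite (neqv hxz); have := Hz2 _ hx hxz.
      have := Hdz _ _ hx hx (Hz2 _ hx hxz) (Hz2 _ hx hxz) 4.
      case: ifP => c1; lia.
    - rewrite (neqv hxz) (neqv hyz).
      have zx := Hz2 _ hx hxz; have zy := Hz2 _ hy hyz.
      have := Hdz _ _ hx hx zx zx 4; have := Hdz _ _ hy hy zy zy 4.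
      have := Hdz _ _ hx hx zx zx 3; have := Hdz _ _ hy hy zy zy 3.
      have := Hdz _ _ hx hy zx zy 3.
      case: ifP => c1; case: ifP => c2; lia.
  move=> x hx /=; case: (eqVneq x z) => [->|hxz]; rewrite ?eqxx; first lia.
  rewrite (neqv hxz).
  have zx := Hz2 _ hx hxz; have := Hdz _ _ hx hx zx zx 4; have := Hdz _ _ hx hx zx zx 3.
  have := ltn_ord x; case: ifP => c1; lia.
case P2: (h + (n + 1 - t.+1 - z) < #|B|).
  exfalso; suff : #|B| <= h + (n + 1 - t.+1 - z) by lia.
  apply: (@card_le_inj _ _ (fun v => if v < t.+1 + z then (minn (v %% z) (z - v %% z)).-1
                                     else h + (v - t.+1 - z))).
    move=> x y hxB hyB /=.
    have zx := HB2 _ hxB; have zy := HB2 _ hyB.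
    move: hxB hyB; rewrite !hB => /andP [hxA hx] /andP [hyA hy].
    have [nx hx2] := res_ok (divn_eq x z) (ltn_pmod x z1)
      (Hdz _ _ hxA hxA zx zx (2 * (x %/ z))) (Hdz _ _ hxA hxA zx zx (2 * (x %/ z) + 1)).
    have [ny hy2] := res_ok (divn_eq y z) (ltn_pmod y z1)
      (Hdz _ _ hyA hyA zy zy (2 * (y %/ z))) (Hdz _ _ hyA hyA zy zy (2 * (y %/ z) + 1)).
    have tx : t < x by clear -hx ht1; lia.
    have ty : t < y by clear -hy ht1; lia.
    case: ifP => c1; case: ifP => c2 e.
    - apply: (ww (divn_eq x z) (divn_eq y z) (ltn_pmod x z1) (ltn_pmod y z1) tx c1 ty c2 _ _
               (Hdz _ _ hxA hyA zx zy (x %/ z + y %/ z + 1)) nx ny e).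
        by move=> hq; rewrite -mulSnr; apply: leq_mul hq (leqnn _).
      by move=> hq; rewrite -mulSnr; apply: leq_mul hq (leqnn _).
    - have wb := wbound nx hx2 (ltn_pmod x z1) hh1 hh2.
      clear -wb e c2; move: wb e; move: ((minn (x %% z) (z - x %% z)).-1) => W; lia.
    - have wb := wbound ny hy2 (ltn_pmod y z1) hh1 hh2.
      clear -wb e c1; move: wb e; move: ((minn (y %% z) (z - y %% z)).-1) => W; lia.
    - clear -e c1 c2; lia.
  move=> x hxB /=.
  have zx := HB2 _ hxB; move: hxB; rewrite hB => /andP [hxA hx].
  have [nx hx2] := res_ok (divn_eq x z) (ltn_pmod x z1)
      (Hdz _ _ hxA hxA zx zx (2 * (x %/ z))) (Hdz _ _ hxA hxA zx zx (2 * (x %/ z) + 1)).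
  have xn := ltn_ord x.
  case: ifP => c1.
  - have wb := wbound nx hx2 (ltn_pmod x z1) hh1 hh2.
    clear -wb; move: wb; move: ((minn (x %% z) (z - x %% z)).-1) => W; lia.
  - clear -c1 xn; lia.
exfalso.
have az := arith1 _ _ _ _ _ ht1 ht2 hh1 hh2 z1 hz3 Hk HBL (negbT P1) (negbT P2).
set k := #|B| in Hk HBL az *.
set lo := 2 * t.+1 + 2 * (n - t - k).
have ec := divn_eq (lo + z - 1) z; have rc := ltn_pmod (lo + z - 1) z1.
move: ec rc; set c := (lo + z - 1) %/ z => ec rc.
have mlo : lo <= c * z by move: ec rc; move: ((lo + z - 1) %% z) (c * z) => r M; lia.
have mhi : c * z <= lo + z - 1 by move: ec; move: ((lo + z - 1) %% z) (c * z) => r M; lia.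
set hm := (c * z).-1 %/ 2.
have hm1 : 2 * hm <= (c * z).-1 by rewrite /hm; move: (c * z) => M; lia.
have hm2 : (c * z).-1 <= 2 * hm + 1 by rewrite /hm; move: (c * z) => M; lia.
clearbody hm.
set hi := minn n (c * z - t.+1).
have fin := arith2 _ _ _ _ _ _ ht1 ht2 HBL az mlo mhi hm1 hm2.
have hmhi : hm < hi by rewrite /hi; clear -fin HBL; move: fin; move: (c * z) => M; lia.
suff : k <= n - t - (hi - hm) by rewrite /hi; clear -fin; move: fin; move: (c * z) => M; lia.
rewrite /hi in hmhi *.
apply: (@card_le_inj _ _ (g3 n t (c * z) hm)).
  move=> x y hxB hyB.
  have zx := HB2 _ hxB; have zy := HB2 _ hyB.
  move: hxB hyB; rewrite !hB => /andP [hxA hx] /andP [hyA hy].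
  have tx : t < x by clear -hx ht1; lia.
  have ty : t < y by clear -hy ht1; lia.
  have xn : x <= n by have := ltn_ord x.
  have yn : y <= n by have := ltn_ord y.
  exact: (inj3 tx ty xn yn (Hdz _ _ hxA hxA zx zx c) (Hdz _ _ hyA hyA zy zy c)
     (Hdz _ _ hxA hyA zx zy c) hm1 hm2 hmhi).
move=> x hxB.
have zx := HB2 _ hxB; move: hxB; rewrite hB => /andP [hxA hx].
have tx : t < x by clear -hx ht1; lia.
have xn : x <= n by have := ltn_ord x.
exact: (bnd3 tx xn (Hdz _ _ hxA hxA zx zx c) hm1 hm2 hmhi).
Qed.
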